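(* Let $\mathcal{S}$ be finite, $\Pi$ irreducible stochastic on $\mathcal{S}$, $\kappa(x,y):=\pi_{xy}-\mathbf{1}_{x=y}$, $Q=(q(y))$ the invariant distribution, and assume detailed balance $q(y)\kappa(y,z)=q(z)\kappa(z,y)$ for all $y,z$. Let $\Phi:(0,\infty)\to\mathbb{R}$ be convex, continuously differentiable with continuous strictly positive second derivative, $\Phi(1)=0$, $\varphi:=\Phi'$. Fix $\ell:\mathcal{S}\to(0,\infty)$ with $\sum_xq(x)\ell(x)=1$. Then for every $f:\mathcal{S}\to\mathbb{R}$, $$\|f\|_{\mathbb{H}^{-1}_\Theta(\mathcal{S},\ell Q)}=\inf_{G:\mathcal{Z}\to\mathbb{R}}\Big\{\|G\|_{\mathbb{L}^2(\mathcal{Z},\vartheta_\ell C)}\;:\;f+\nabla\cdot(\vartheta_\ell G)=0\Big\}.$$ Moreover $\|f\|_{\mathbb{H}^{-1}_\Theta(\mathcal{S},\ell Q)}<\infty$ if and only if $\sum_xq(x)f(x)=0$; in that case the infimum is attained, and uniquely, by the unique discrete gradient $G=\nabla h$ ($h:\mathcal{S}\to\mathbb{R}$) satisfying the constraint.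
   Context: $\mathcal{Z}:=\{(x,y):\kappa(x,y)>0\}$, $c(x,y):=\frac12\kappa(x,y)q(x)$. Discrete gradient $\nabla f(x,y):=f(y)-f(x)$; discrete divergence of $F$: $(\nabla\cdot F)(x):=\frac12\sum_{y\neq x}\kappa(x,y)[F(x,y)-F(y,x)]$. $\Theta^\Phi(a,b):=\frac{a-b}{\varphi(a)-\varphi(b)}$ for $a\neq b$, $\Theta^\Phi(b,b):=1/\Phi''(b)$; $\vartheta_\ell(x,y):=\Theta^\Phi(\ell(x),\ell(y))$. Weighted norm $\|F\|^2_{\mathbb{L}^2(\mathcal{Z},\vartheta_\ell C)}:=\sum_{(x,y)\in\mathcal{Z}}c(x,y)\vartheta_\ell(x,y)F(x,y)^2$ (with inner product defined analogously). $\|f\|_{\mathbb{H}^1_\Theta(\mathcal{S},\ell Q)}:=\|\nabla f\|_{\mathbb{L}^2(\mathcal{Z},\vartheta_\ell C)}$, and $\|f\|_{\mathbb{H}^{-1}_\Theta(\mathcal{S},\ell Q)}:=\sup_{g:\mathcal{S}\to\mathbb{R}}\frac{\sum_xq(x)f(x)g(x)}{\|g\|_{\mathbb{H}^1_\Theta(\mathcal{S},\ell Q)}}$. *)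

(* Defs.v *)
From HB Require Import structures.
From mathcomp Require Import all_boot all_order all_algebra.
From mathcomp Require Import all_classical all_reals all_analysis.
Set Implicit Arguments. Unset Strict Implicit. Unset Printing Implicit Defensive.
Import Order.TTheory GRing.Theory Num.Theory numFieldNormedType.Exports.
Local Open Scope ring_scope.

Section Defs.
Variables (R : realType) (S : finType).

Definition kappa (Pi : S -> S -> R) (x y : S) : R := Pi x y - (x == y)%:R.

Definition stochastic (Pi : S -> S -> R) : Prop :=
  (forall x y, 0 <= Pi x y) /\ (forall x, \sum_(y : S) Pi x y = 1).

Definition irreducible (Pi : S -> S -> R) : Prop :=
  forall x y, connect (fun a b => 0 < Pi a b) x y.

Definition invariant_distribution (Pi : S -> S -> R) (q : S -> R) : Prop :=
  (forall x, 0 <= q x) /\ \sum_(x : S) q x = 1 /\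
  (forall y, \sum_(x : S) q x * Pi x y = q y).

Definition Theta (Phi : R -> R) (a b : R) : R :=
  if a == b then (derive1 (derive1 Phi) b)^-1
  else (a - b) / (derive1 Phi a - derive1 Phi b).

Definition vartheta (Phi : R -> R) (l : S -> R) (x y : S) : R :=
  Theta Phi (l x) (l y).

Definition dgrad (f : S -> R) (x y : S) : R := f y - f x.

(* discrete divergence of F : S -> S -> R (only values on Z matter) *)
Definition ddiv (Pi : S -> S -> R) (F : S -> S -> R) (x : S) : R :=
  2^-1 * \sum_(y : S | y != x) kappa Pi x y * (F x y - F y x).

Definition cw (Pi : S -> S -> R) (q : S -> R) (x y : S) : R :=
  2^-1 * kappa Pi x y * q x.

(* || F ||_{L^2(Z, vartheta_l C)}, sum over Z = {(x,y) : kappa(x,y) > 0} *)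
Definition L2norm (Pi : S -> S -> R) (q : S -> R) (Phi : R -> R) (l : S -> R)
  (F : S -> S -> R) : R :=
  Num.sqrt (\sum_(p : S * S | 0 < kappa Pi p.1 p.2)
              cw Pi q p.1 p.2 * vartheta Phi l p.1 p.2 * F p.1 p.2 ^+ 2).

Definition H1norm Pi q Phi l (g : S -> R) : R := L2norm Pi q Phi l (dgrad g).

Definition ediv (a b : R) : \bar R :=
  if b == 0 then (if a == 0 then 0%E else if 0 < a then +oo%E else -oo%E)
  else (a / b)%:E.

Definition Hm1norm Pi q Phi l (f : S -> R) : \bar R :=
  ereal_sup [set r | exists g : S -> R,
     r = ediv (\sum_(x : S) q x * f x * g x) (H1norm Pi q Phi l g)].

Definition flux_constraint Pi Phi l (f : S -> R) (G : S -> S -> R) : Prop :=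
  forall x, f x + ddiv Pi (fun a b => vartheta Phi l a b * G a b) x = 0.

End Defs.

(* Main.v *)
Require Import Defs.
From HB Require Import structures.
From mathcomp Require Import all_boot all_order all_algebra.
From mathcomp Require Import all_classical all_reals all_analysis.
From mathcomp Require Import ring lra zify.
Set Implicit Arguments. Unset Strict Implicit. Unset Printing Implicit Defensive.
Import Order.TTheory GRing.Theory Num.Theory numFieldNormedType.Exports.
Local Open Scope ring_scope.
Local Open Scope classical_set_scope.

Lemma phi_incr (R : realType) (Phi : R -> R)
  (hPhi_c1 : forall x : R, 0 < x -> {for x, continuous (derive1 Phi)})
  (hPhi_d2 : forall x : R, 0 < x -> derivable (derive1 Phi) x 1)
  (hPhi_pos : forall x : R, 0 < x -> 0 < (derive1 (derive1 Phi)) x)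
  (x y : R) : 0 < x -> x < y -> derive1 Phi x < derive1 Phi y.
Proof.
move=> x0 xy.
have := @MVT R (derive1 Phi) (derive1 (derive1 Phi)) x y xy.
case.
- move=> z; rewrite in_itv /= => /andP[xz _].
  rewrite derive1E; apply/derivableP; apply: hPhi_d2; exact: lt_trans xz.
- apply: continuous_in_subspaceT => z; rewrite inE /= in_itv /= => /andP[xz _].
  apply: hPhi_c1; exact: lt_le_trans xz.
move=> c; rewrite in_itv /= => /andP[xc _] e.
rewrite -subr_gt0 e mulr_gt0 // ?subr_gt0 //; apply: hPhi_pos; exact: lt_trans xc.
Qed.
Lemma Theta_sym (R : realType) (Phi : R -> R) a b : Theta Phi a b = Theta Phi b a.
Proof.
rewrite /Theta eq_sym; case: eqP => [->|_] //. idtac.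
have h (u v : R) : u / v = (- u) / (- v) by rewrite invrN mulrNN.
by rewrite h !opprB.
Qed.

Lemma Theta_pos (R : realType) (Phi : R -> R)
  (incr : forall x y : R, 0 < x -> x < y -> derive1 Phi x < derive1 Phi y)
  (hPhi_pos : forall x : R, 0 < x -> 0 < (derive1 (derive1 Phi)) x)
  a b : 0 < a -> 0 < b -> 0 < Theta Phi a b.
Proof.
move=> a0 b0; rewrite /Theta; case: eqP => [_|/eqP ab].
  by rewrite invr_gt0 hPhi_pos.
case: (ltgtP a b) ab => // [lab|lba] _.
  have h (u v : R) : u / v = (- u) / (- v) by rewrite invrN mulrNN.
  by rewrite h !opprB divr_gt0 // subr_gt0 // incr.
by rewrite divr_gt0 // subr_gt0 // incr.
Qed.
Lemma q_pos (R : realType) (S : finType) (Pi : S -> S -> R) (q : S -> R) :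
  stochastic Pi -> irreducible Pi -> invariant_distribution Pi q ->
  forall x, 0 < q x.
Proof.
move=> [Pi0 _] hirr [q0 [q1 qinv]] x.
rewrite lt_def q0 andbT; apply/negP => /eqP qx0.
have H : forall z, q z = 0.
  move=> z; have /connectP [p pp e] := hirr z x.
  rewrite e {e} in qx0.
  elim: p z pp qx0 => [|a p IH] z /=; first by [].
  move=> /andP [za pa] ql; have qa := IH a pa ql.
  have := qinv a; rewrite qa => /eqP; rewrite psumr_eq0; last first.
    by move=> i _; rewrite mulr_ge0.
  move=> /allP /(_ z (mem_index_enum _)) /=; rewrite mulf_eq0 => /orP [/eqP //|/eqP e].
  by move: za; rewrite e ltxx.
move: q1; rewrite big1 => [/eqP|y _]; last exact: H.
by rewrite eq_sym oner_eq0.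
Qed.

Lemma kappa_off_ge0 (R : realType) (S : finType) (Pi : S -> S -> R) :
  stochastic Pi -> forall x y, x != y -> 0 <= kappa Pi x y.
Proof. by move=> [P0 _] x y /negbTE xy; rewrite /kappa xy subr0. Qed.

Lemma kappa_diag_le0 (R : realType) (S : finType) (Pi : S -> S -> R) :
  stochastic Pi -> forall x, kappa Pi x x <= 0.
Proof.
move=> [P0 P1] x; rewrite /kappa eqxx subr_le0 -(P1 x) (bigD1 x) //= lerDl.
by apply: sumr_ge0.
Qed.

Lemma grad0_const (R : realType) (S : finType) (Pi : S -> S -> R) (h : S -> R) :
  irreducible Pi -> (forall x y, 0 < kappa Pi x y -> h y = h x) ->
  forall x y, h x = h y.
Proof.
move=> hirr H x y; have /connectP [p pp e] := hirr x y.
rewrite e {e}; elim: p x pp => [|a p IH] z //= /andP [za pa].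
rewrite -IH //; have [->//|na] := eqVneq z a.
by apply/esym/H; rewrite /kappa (negbTE na) subr0.
Qed.
Definition Lop (R : realType) (S : finType) (A : S -> S -> R)
  (u : {ffun S -> R^o}) : {ffun S -> R^o} :=
  [ffun x => \sum_y A x y * (u y - u x)].

Fact Lop_linear (R : realType) (S : finType) (A : S -> S -> R) : linear (Lop A).
Proof.
move=> a u v; apply/ffunP => x; rewrite !ffunE /= scaler_sumr -big_split /=.
apply: eq_bigr => y _; rewrite !ffunE /= /GRing.scale /=; ring.
Qed.

HB.instance Definition _ (R : realType) (S : finType) (A : S -> S -> R) :=
  GRing.isLinear.Build R {ffun S -> R^o} {ffun S -> R^o} _ (Lop A) (Lop_linear A).

Definition Pop (R : realType) (S : finType) (q : S -> R)
  (u : {ffun S -> R^o}) : R^o := \sum_x q x * u x.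

Fact Pop_linear (R : realType) (S : finType) (q : S -> R) : linear (Pop q).
Proof.
move=> a u v; rewrite /Pop scaler_sumr -big_split /=.
apply: eq_bigr => y _; rewrite !ffunE /= /GRing.scale /=; ring.
Qed.

HB.instance Definition _ (R : realType) (S : finType) (q : S -> R) :=
  GRing.isLinear.Build R {ffun S -> R^o} R^o _ (Pop q) (Pop_linear q).

Lemma solve_lap (R : realType) (S : finType) (A : S -> S -> R) (q : S -> R) :
 (forall h : S -> R, (forall x, \sum_y A x y * (h y - h x) = 0) -> forall x y, h x = h y) ->
 (forall h : S -> R, \sum_x q x * \sum_y A x y * (h y - h x) = 0) ->
 \sum_x q x != 0 ->
 forall f : S -> R, \sum_x q x * f x = 0 ->
 exists h : S -> R, forall x, \sum_y A x y * (h y - h x) = f x.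
Proof.
move=> hker himg hq f hf.
pose F := linfun (Lop A); pose P := linfun (Pop q).
pose one : {ffun S -> R^o} := [ffun=> 1].
have d1 : (\dim (lker F) <= 1)%N.
  apply: (@leq_trans (\dim <[one]>)); last by rewrite dim_vline; case: (one != 0).
  apply: dimvS; apply/subvP => v; rewrite memv_ker lfunE /= => /eqP Fv.
  have Fv' : forall x, \sum_y A x y * (v y - v x) = 0.
    by move=> x; have := congr1 (fun w : {ffun S -> R^o} => w x) Fv; rewrite !ffunE.
  have vc := hker (fun y => v y) Fv'.
  case: (pickP S) => [x0 _|S0].
    have -> : v = v x0 *: one by apply/ffunP => y; rewrite !ffunE /= /GRing.scale /= mulr1 (vc y x0).
    by rewrite memvZ // memv_line.
  have -> : v = 0 by apply/ffunP => y; have := S0 y.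
  exact: mem0v.
have d2 := limg_ker_dim F fullv; rewrite capfv in d2.
have d3 := limg_ker_dim P fullv; rewrite capfv in d3.
have d4 : (1 <= \dim (limg P))%N.
  rewrite lt0n dimv_eq0; apply/negP => /eqP e.
  have e1 : P one = \sum_x q x.
    by rewrite lfunE /= /Pop; apply: eq_bigr => x _; rewrite ffunE mulr1.
  have : P one \in limg P by apply: memv_img; exact: memvf.
  by rewrite e memv0 e1 (negbTE hq).
have sub : (limg F <= lker P)%VS.
  apply/subvP => w /memv_imgP [u _ ->]; rewrite memv_ker !lfunE /= /Pop.
  apply/eqP; rewrite -[RHS](himg (fun y => u y)); apply: eq_bigr => x _.
  by rewrite ffunE.
have eqv : limg F == lker P.
  by rewrite eqEdim sub /=; lia.
pose v : {ffun S -> R^o} := [ffun x => f x].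
have : v \in lker P.
  rewrite memv_ker lfunE /= /Pop; apply/eqP; rewrite -[RHS]hf.
  by apply: eq_bigr => x _; rewrite ffunE.
rewrite -(eqP eqv) => /memv_imgP [u _ e].
exists (fun y => u y) => x.
have := congr1 (fun w : {ffun S -> R^o} => w x) e; rewrite lfunE /= !ffunE => ->.
by [].
Qed.

Section Main.
Variables (R : realType) (S : finType) (Pi : S -> S -> R) (q : S -> R) (th : S -> S -> R).
Hypothesis hdb : forall y z, q y * kappa Pi y z = q z * kappa Pi z y.
Hypothesis th_sym : forall x y, th x y = th y x.
Hypothesis hq : forall x, 0 < q x.
Hypothesis hth : forall x y, 0 < th x y.
Hypothesis hk : forall x y, x != y -> 0 <= kappa Pi x y.
Hypothesis hirr : irreducible Pi.
Hypothesis hq1 : \sum_x q x = 1.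

Lemma msq_ge0 (x : R) : 0 <= x * x. Proof. by rewrite -expr2 sqr_ge0. Qed.

Definition W x y := 2^-1 * kappa Pi x y * q x * th x y.
Definition B (F G : S -> S -> R) := \sum_(p : S * S | 0 < kappa Pi p.1 p.2)
   W p.1 p.2 * F p.1 p.2 * G p.1 p.2.

Lemma W_pos x y : 0 < kappa Pi x y -> 0 < W x y.
Proof. by move=> k0; rewrite /W !mulr_gt0 // invr_gt0 ltr0n. Qed.

Lemma B_ge0 F : 0 <= B F F.
Proof.
apply: sumr_ge0 => p k0; rewrite -mulrA mulr_ge0 ?msq_ge0 //.
exact/ltW/W_pos.
Qed.

Lemma B_comb (u v : R) F G :
  B (fun a b => u * F a b - v * G a b) (fun a b => u * F a b - v * G a b) =
  u ^+ 2 * B F F - 2 * u * v * B F G + v ^+ 2 * B G G.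
Proof.
rewrite /B !mulr_sumr -sumrB -big_split /=; apply: eq_bigr => p _; ring.
Qed.

Lemma B_eq0 F : B F F = 0 -> forall x y, 0 < kappa Pi x y -> F x y = 0.
Proof.
move=> /eqP; rewrite /B psumr_eq0 => [/allP H x y k0|p k0].
  have := H (x, y) (mem_index_enum _); rewrite /= k0 /= -mulrA mulf_eq0.
  rewrite gt_eqF ?W_pos //= mulf_eq0 orbb => /eqP //.
rewrite -mulrA mulr_ge0 ?msq_ge0 //; exact/ltW/W_pos.
Qed.

Lemma B0l F G : (forall x y, 0 < kappa Pi x y -> F x y = 0) -> B F G = 0.
Proof. move=> H; rewrite /B big1 // => p k0; by rewrite H // mulr0 mul0r. Qed.

Lemma B_sym F G : B F G = B G F.
Proof. by rewrite /B; apply: eq_bigr => p _; ring. Qed.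

Lemma B_CS F G : B F G <= Num.sqrt (B F F) * Num.sqrt (B G G).
Proof.
have [A0|A0] := eqVneq (B F F) 0.
  by rewrite B0l ?mulr_ge0 ?sqrtr_ge0 //; exact: B_eq0.
have [C0|C0] := eqVneq (B G G) 0.
  by rewrite B_sym B0l ?mulr_ge0 ?sqrtr_ge0 //; exact: B_eq0.
set s := Num.sqrt (B F F); set t := Num.sqrt (B G G).
have s0 : 0 < s by rewrite sqrtr_gt0 lt_def A0 B_ge0.
have t0 : 0 < t by rewrite sqrtr_gt0 lt_def C0 B_ge0.
have := B_ge0 (fun a b => t * F a b - s * G a b).
rewrite B_comb -[B F F]sqr_sqrtr ?B_ge0 // -[B G G]sqr_sqrtr ?B_ge0 // -/s -/t.
move=> h.
have h2 : 0 <= 2 * s * t * (s * t - B F G) by lra.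
rewrite -subr_ge0; move: h2; rewrite pmulr_rge0 // !mulr_gt0 //.
Qed.

Lemma IBP_full (g : S -> R) (G : S -> S -> R) :
  \sum_x q x * g x * ddiv Pi (fun a b => th a b * G a b) x =
  - \sum_x \sum_y W x y * dgrad g x y * G x y.
Proof.
rewrite /ddiv /W /dgrad.
have e0 x : \sum_(y | y != x) kappa Pi x y * (th x y * G x y - th y x * G y x)
   = \sum_y kappa Pi x y * (th x y * G x y - th y x * G y x).
  rewrite [RHS](bigD1 x) //= subrr mulr0 add0r; done.
under eq_bigr => x _ do rewrite e0 mulr_sumr mulr_sumr.
have e1 : \sum_x \sum_y (q x * kappa Pi x y) * th y x * g x * G y x
        = \sum_x \sum_y (q x * kappa Pi x y) * th x y * g y * G x y.
  rewrite exchange_big; apply: eq_bigr => i _; apply: eq_bigr => j _.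
  by rewrite hdb (th_sym i j).
have e2 : \sum_x \sum_y q x * g x * (2^-1 * (kappa Pi x y * (th x y * G x y - th y x * G y x)))
   = 2^-1 * (\sum_x \sum_y (q x * kappa Pi x y) * th x y * g x * G x y
      - \sum_x \sum_y (q x * kappa Pi x y) * th y x * g x * G y x).
  rewrite -sumrB mulr_sumr; apply: eq_bigr => x _.
  rewrite -sumrB mulr_sumr; apply: eq_bigr => y _; ring.
rewrite e2 e1 -sumrB mulr_sumr -sumrN; apply: eq_bigr => x _.
rewrite -sumrB mulr_sumr -sumrN; apply: eq_bigr => y _; ring.
Qed.

Lemma Zrestrict (g : S -> R) (G : S -> S -> R) :
  \sum_x \sum_y W x y * dgrad g x y * G x y = B (dgrad g) G.
Proof.
rewrite pair_big /B [RHS]big_mkcond; apply: eq_bigr => [[x y]] _ /=.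
case: ifP => // /negbT k0.
have [->|nxy] := eqVneq x y; first by rewrite /dgrad subrr mulr0 mul0r.
have kz : kappa Pi x y = 0.
  by apply/eqP; rewrite eq_le (hk nxy) andbT leNgt.
by rewrite /W kz mulr0 !mul0r.
Qed.

Lemma IBP (g : S -> R) (G : S -> S -> R) :
  \sum_x q x * g x * ddiv Pi (fun a b => th a b * G a b) x = - B (dgrad g) G.
Proof. by rewrite IBP_full Zrestrict. Qed.

Lemma ddiv_grad h x :
  ddiv Pi (fun a b => th a b * dgrad h a b) x =
  \sum_y (kappa Pi x y * th x y) * (h y - h x).
Proof.
rewrite /ddiv /dgrad [RHS](bigD1 x) //= subrr mulr0 add0r mulr_sumr.
apply: eq_bigr => y _; rewrite (th_sym y x).
have -> : (2^-1 : R) = 1 / 2 by rewrite div1r.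
by field.
Qed.

Lemma dgrad_const (c : R) : B (dgrad (fun=> c)) (dgrad (fun=> c)) = 0.
Proof. by apply: B0l => x y _; rewrite /dgrad subrr. Qed.



Lemma constraint_pair f G g :
  (forall x, f x + ddiv Pi (fun a b => th a b * G a b) x = 0) ->
  \sum_x q x * f x * g x = B (dgrad g) G.
Proof.
move=> H; rewrite -[RHS]opprK -IBP -sumrN; apply: eq_bigr => x _.
have -> : f x = - ddiv Pi (fun a b => th a b * G a b) x.
  by apply/eqP; rewrite -addr_eq0 H.
ring.
Qed.

Lemma constraint_sum f G :
  (forall x, f x + ddiv Pi (fun a b => th a b * G a b) x = 0) ->
  \sum_x q x * f x = 0.
Proof.
move=> H; have := constraint_pair (fun=> 1) H.
rewrite B0l => [|x y _]; last by rewrite /dgrad subrr.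
move=> e; rewrite -[RHS]e; apply: eq_bigr => x _; by rewrite mulr1.
Qed.

Lemma exists_h f : \sum_x q x * f x = 0 ->
  exists h : S -> R, forall x, f x + ddiv Pi (fun a b => th a b * dgrad h a b) x = 0.
Proof.
move=> hf.
have [||||h Hh] := solve_lap (A := fun x y => kappa Pi x y * th x y) (q := q)
   _ _ _ (f := fun x => - f x).
- move=> h0 H0.
  have B0 : B (dgrad h0) (dgrad h0) = 0.
    have := IBP h0 (dgrad h0); rewrite big1 => [|x _]; last by rewrite ddiv_grad H0 mulr0.
    by move=> /esym /eqP; rewrite oppr_eq0 => /eqP.
  apply: grad0_const hirr _ => x y k0; apply/eqP; rewrite -subr_eq0.
  by have := B_eq0 B0 k0; rewrite /dgrad => ->.
- move=> h0; have := IBP (fun=> 1) (dgrad h0).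
  rewrite B0l => [|x y _]; last by rewrite /dgrad subrr.
  rewrite oppr0 => e; rewrite -[RHS]e; apply: eq_bigr => x _; by rewrite mulr1 ddiv_grad.
- by rewrite hq1 oner_neq0.
- by under eq_bigr do rewrite mulrN; rewrite sumrN hf oppr0.
exists h => x; rewrite ddiv_grad Hh; exact: subrr.
Qed.
End Main.

Theorem proposition8p3 (R : realType) (S : finType)
  (Pi : S -> S -> R) (q : S -> R) (Phi : R -> R) (l : S -> R)
  (hstoch : stochastic Pi) (hirr : irreducible Pi)
  (hq : invariant_distribution Pi q)
  (hdb : forall y z, q y * kappa Pi y z = q z * kappa Pi z y)
  (hPhi_conv : forall x y t : R, 0 < x -> 0 < y -> 0 <= t <= 1 ->
      Phi (t * x + (1 - t) * y) <= t * Phi x + (1 - t) * Phi y)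
  (hPhi_d1 : forall x : R, 0 < x -> derivable Phi x 1)
  (hPhi_c1 : forall x : R, 0 < x -> {for x, continuous (derive1 Phi)})
  (hPhi_d2 : forall x : R, 0 < x -> derivable (derive1 Phi) x 1)
  (hPhi_c2 : forall x : R, 0 < x -> {for x, continuous (derive1 (derive1 Phi))})
  (hPhi_pos : forall x : R, 0 < x -> 0 < (derive1 (derive1 Phi)) x)
  (hPhi1 : Phi 1 = 0)
  (hl : forall x, 0 < l x) (hl1 : \sum_(x : S) q x * l x = 1)
  (f : S -> R) :
  Hm1norm Pi q Phi l f =
    ereal_inf [set ((L2norm Pi q Phi l G)%:E) | G in
                 [set G : S -> S -> R | flux_constraint Pi Phi l f G]]
  /\ ((Hm1norm Pi q Phi l f < +oo)%E <-> \sum_(x : S) q x * f x = 0)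
  /\ (\sum_(x : S) q x * f x = 0 ->
      exists h : S -> R,
        flux_constraint Pi Phi l f (dgrad h)
        /\ (L2norm Pi q Phi l (dgrad h))%:E = Hm1norm Pi q Phi l f
        /\ (forall h' : S -> R, flux_constraint Pi Phi l f (dgrad h') ->
              forall x y, 0 < kappa Pi x y -> dgrad h' x y = dgrad h x y)
        /\ (forall G : S -> S -> R, flux_constraint Pi Phi l f G ->
              (L2norm Pi q Phi l G)%:E = Hm1norm Pi q Phi l f ->
              forall x y, 0 < kappa Pi x y -> G x y = dgrad h x y)).
Proof.
set th := vartheta Phi l.
have th_sym : forall x y, th x y = th y x by move=> x y; exact: Theta_sym.
have incr := phi_incr hPhi_c1 hPhi_d2 hPhi_pos.
have hth : forall x y, 0 < th x y.
  move=> x y; rewrite /th /vartheta; apply: (Theta_pos incr hPhi_pos) => //.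
have hqp := q_pos hstoch hirr hq.
have hk : forall x y, x != y -> 0 <= kappa Pi x y := kappa_off_ge0 hstoch.
have hq1 : \sum_x q x = 1 := hq.2.1.
have L2E : forall F, L2norm Pi q Phi l F = Num.sqrt ((B Pi q th) F F).
  move=> F; rewrite /L2norm /B /W /cw; congr Num.sqrt.
  by apply: eq_bigr => p _; rewrite expr2 !mulrA.
have H1E : forall g, H1norm Pi q Phi l g = Num.sqrt ((B Pi q th) (dgrad g) (dgrad g)).
  by move=> g; exact: L2E.
have cpair := constraint_pair hdb th_sym hk.
have csum := constraint_sum hdb th_sym hk.
have BBge0 : forall F, 0 <= (B Pi q th) F F := B_ge0 Pi hqp hth.
set s := \sum_x q x * f x.
have [s0|s0] := eqVneq s 0; last first.
  have Hinf : Hm1norm Pi q Phi l f = +oo%E.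
    apply/eqP; rewrite -leye_eq; apply: ereal_sup_ubound; exists (fun=> s).
    rewrite H1E (_ : (B Pi q th) _ _ = 0) ?sqrtr0; last by apply: B0l => x y _; rewrite /dgrad subrr.
    rewrite /ediv eqxx -mulr_suml -/s.
    have ss : 0 < s * s by rewrite lt_def mulf_neq0 // msq_ge0.
    by rewrite (gt_eqF ss) ss.
  have Hset : [set (L2norm Pi q Phi l G)%:E | G in
                 [set G : S -> S -> R | flux_constraint Pi Phi l f G]] = set0.
    apply/seteqP; split => // r [G HG _]; exfalso; move: s0.
    by rewrite /s (csum _ _ HG) eqxx.
  rewrite Hset ereal_inf0 Hinf; split => //; split; last by move=> e; move: s0; rewrite e eqxx.
  by rewrite ltxx; split => // e; move: s0; rewrite e eqxx.
have [h Hh] := exists_h hdb th_sym hqp hth hk hirr hq1 s0.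
set N := Num.sqrt ((B Pi q th) (dgrad h) (dgrad h)).
have N0 : 0 <= N := sqrtr_ge0 _.
have BhN : (B Pi q th) (dgrad h) (dgrad h) = N ^+ 2 by rewrite sqr_sqrtr.
have key : forall G, flux_constraint Pi Phi l f G -> (B Pi q th) (dgrad h) G = N ^+ 2.
  by move=> G HG; rewrite -(cpair _ _ h HG) (cpair _ _ h Hh); exact: BhN.
have HmE : Hm1norm Pi q Phi l f = N%:E.
  apply/le_anti/andP; split.
    apply: ge_ereal_sup => r [g ->].
    rewrite H1E (cpair _ _ g Hh).
    set D := Num.sqrt ((B Pi q th) (dgrad g) (dgrad g)).
    rewrite /ediv; have [D0|D0] := eqVneq D 0.
      have Bg0 : (B Pi q th) (dgrad g) (dgrad g) = 0.
        apply/le_anti; rewrite BBge0 andbT -sqrtr_eq0; exact/eqP.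
      by rewrite (B0l q th (dgrad h) (B_eq0 hqp hth Bg0)) eqxx lee_fin.
    have Dp : 0 < D by rewrite lt_def D0 sqrtr_ge0.
    rewrite lee_fin ler_pdivrMr // mulrC.
    exact: B_CS.
  apply: ereal_sup_ubound; exists h.
  rewrite H1E (cpair _ _ h Hh) -/N BhN /ediv.
  have [->|Np] := eqVneq N 0; first by rewrite expr2 mulr0 eqxx.
  by rewrite expr2 mulfK.
have Hinf : ereal_inf [set (L2norm Pi q Phi l G)%:E | G in
                 [set G : S -> S -> R | flux_constraint Pi Phi l f G]] = N%:E.
  apply/le_anti/andP; split.
    by apply: ereal_inf_lbound; exists (dgrad h) => //; rewrite L2E.
  apply: le_ereal_inf_tmp => r [G HG <-]; rewrite L2E lee_fin.
  have := B_CS Pi hqp hth (dgrad h) G; rewrite (key G HG) -/N.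
  have [->|Np] := eqVneq N 0; first by rewrite sqrtr_ge0.
  move=> h2; have Np' : 0 < N by rewrite lt_def Np N0.
  by rewrite -(ler_pM2l Np') -expr2.
split; first by rewrite HmE Hinf.
split; first by rewrite HmE ltry; split.
move=> _; exists h; split => //; split; first by rewrite L2E HmE.
split.
  move=> h' Hh' x y k0.
  have e1 := key _ Hh'.
  have e2 : (B Pi q th) (dgrad h') (dgrad h') = N ^+ 2.
    by rewrite -(cpair _ _ h' Hh') (cpair _ _ h' Hh) B_sym.
  have Z : (B Pi q th) (fun a b => 1 * dgrad h' a b - 1 * dgrad h a b)
              (fun a b => 1 * dgrad h' a b - 1 * dgrad h a b) = 0.
    by rewrite B_comb e2 B_sym e1 BhN; ring.
  have := B_eq0 hqp hth Z k0; rewrite !mul1r => /eqP; rewrite subr_eq0 => /eqP.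
  done.
move=> G HG GN x y k0.
rewrite HmE L2E in GN; case: GN => GN.
have GG : (B Pi q th) G G = N ^+ 2 by rewrite -GN sqr_sqrtr.
have e1 := key _ HG.
have Z : (B Pi q th) (fun a b => 1 * G a b - 1 * dgrad h a b)
            (fun a b => 1 * G a b - 1 * dgrad h a b) = 0.
  by rewrite B_comb GG B_sym e1 BhN; ring.
have := B_eq0 hqp hth Z k0; rewrite !mul1r => /eqP; rewrite subr_eq0 => /eqP.
done.
Qed.
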